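(* Let $\mathcal{S}$ be a state space, $\mathcal{A}$ a finite action space, $\rho$ a distribution on $\mathcal{S}$, $\pi_{\mathrm{ref}}$ a policy with full support, $\beta>0$, $R>0$, and $r^*:\mathcal{S}\times\mathcal{A}\to[0,R]$. Let $$\Pi_{\le R/\beta}:=\Big\{\pi:\mathcal{S}\to\Delta(\mathcal{A})\ \Big|\ \max_{s,a}\Big|\log\frac{\pi(a|s)}{\pi_{\mathrm{ref}}(a|s)}\Big|\le\frac R\beta\Big\}.$$ Then for any policy $\pi\in\Pi_{\le R/\beta}$, $$\mathrm{Cov}^{\pi^*_{r^*}|\pi}\le1+\kappa\big(e^{2R/\beta}\big)\cdot\frac{J_\beta(\pi^*_{r^*})-J_\beta(\pi)}{\beta},$$ where $\kappa(x):=\frac{(x-1)^2}{x-1-\log x}$ (and $\kappa(x)=O(x)$).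
   Context: $\pi^*_{r^*}(a|s)\propto\pi_{\mathrm{ref}}(a|s)e^{r^*(s,a)/\beta}$; $J_\beta(\pi):=\mathbb{E}_{s\sim\rho}[\mathbb{E}_{a\sim\pi(\cdot|s)}r^*(s,a)-\beta\mathrm{KL}(\pi(\cdot|s)\|\pi_{\mathrm{ref}}(\cdot|s))]$; $\mathrm{Cov}^{\tilde\pi|\pi}:=\mathbb{E}_{s\sim\rho,a\sim\tilde\pi(\cdot|s)}[\tilde\pi(a|s)/\pi(a|s)]$. *)

(* Defs.v *)
From HB Require Import structures.
From mathcomp Require Import all_boot all_order all_algebra.
From mathcomp Require Import all_classical all_reals all_analysis.

Set Implicit Arguments.
Unset Strict Implicit.
Unset Printing Implicit Defensive.

Import Order.TTheory GRing.Theory Num.Theory.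
Local Open Scope ring_scope.

Section Defs.
Context {R : realType} {S : Type} {A : finType}.

Definition is_policy (pi : S -> A -> R) : Prop :=
  forall s, (forall a, 0 <= pi s a) /\ \sum_(a : A) pi s a = 1.

(* KL(p || q) = sum_a p(a) log (p(a)/q(a)), with 0 log 0 = 0
   (automatic since ln 0 = 0 in mathcomp-analysis). *)
Definition KL (p q : A -> R) : R := \sum_(a : A) p a * ln (p a / q a).

Definition pistar (piref : S -> A -> R) (r : S -> A -> R) (beta : R) : S -> A -> R :=
  fun s a => piref s a * expR (r s a / beta) /
             \sum_(b : A) piref s b * expR (r s b / beta).

(* Pi_{<= R/beta}: policies with |log(pi/pi_ref)| <= R/beta everywhere.
   Since log 0 = -oo, the bound forces pi(a|s) > 0; we state it explicitly
   because mathcomp's ln is total with ln 0 = 0. *)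
Definition Pi_le (piref : S -> A -> R) (Rb beta : R) (pi : S -> A -> R) : Prop :=
  is_policy pi /\
  forall s a, 0 < pi s a /\ `| ln (pi s a / piref s a) | <= Rb / beta.

Definition kappa (x : R) : R := (x - 1) ^+ 2 / (x - 1 - ln x).

End Defs.

Section Integrals.
Local Open Scope ereal_scope.
Context {d : measure_display} {S : measurableType d} {R : realType} {A : finType}.

Definition Jbeta (rho : probability S R) (piref r : S -> A -> R) (beta : R)
    (pi : S -> A -> R) : \bar R :=
  \int[rho]_s ((\sum_(a : A) pi s a * r s a - beta * KL (pi s) (piref s))%R)%:E.

Definition Cov (rho : probability S R) (pt pi : S -> A -> R) : \bar R :=
  \int[rho]_s ((\sum_(a : A) pt s a * (pt s a / pi s a))%R)%:E.

End Integrals.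

(* Main.v *)
Require Import Defs.
From HB Require Import structures.
From mathcomp Require Import all_boot all_order all_algebra.
From mathcomp Require Import all_classical all_reals all_analysis.
From mathcomp Require Import ring lra.
From mathcomp Require Import measurable_realfun.
Import Order.TTheory GRing.Theory Num.Theory.

Module M_scratch.
Local Open Scope classical_set_scope.
Local Open Scope ring_scope.

Section RealIneq.
Context {R : realType}.

Definition Ff (a c : R) : R -> R :=
  ((a \*: ((id : R -> R) - (@ln R))) - (c \*: (((id : R -> R) - cst 1) * ((id : R -> R) - cst 1))) : R -> R).

Lemma FfE a c t : Ff a c t = a * (t - ln t) - c * ((t - 1) * (t - 1)).
Proof. by []. Qed.

Lemma Ff_der (a c t : R) : 0 < t ->
  is_derive t 1 (Ff a c) (a * (1 - t^-1) - c * (2 * (t - 1))).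
Proof.
move=> t0.
have hl := is_derive1_ln t0.
apply: is_derive_eq.
rewrite /=. change (a * (1 - t^-1) - c * ((t - 1) * (1 - 0) + (t - 1) * (1 - 0)) = a * (1 - t^-1) - c * (2 * (t - 1))). ring.
Qed.

End RealIneq.
Section RealIneq2.
Context {R : realType}.
Definition Dd (a c t : R) := a * (1 - t^-1) - c * (2 * (t - 1)).

Lemma Ff_mvt (a c u v : R) : 0 < u -> u < v ->
  exists2 t, u < t < v & Ff a c v - Ff a c u = Dd a c t * (v - u).
Proof.
move=> u0 uv.
have der : forall x, x \in `]u, v[%R -> is_derive x 1 (Ff a c) (Dd a c x).
  move=> x; rewrite in_itv /= => /andP[ux _]; apply: Ff_der.
  exact: lt_trans ux.
have cont := @derivable_within_continuous R _ (Ff a c) `[u, v]%R.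
  rewrite /= in cont.
have cont' : {in `[u, v]%R, forall x, derivable (Ff a c) x 1}.
  move=> x; rewrite in_itv /= => /andP[ux _].
  have x0 : 0 < x by exact: lt_le_trans ux.
  have := @Ff_der R a c x x0; by case.
have [t tin eq] := MVT uv der (cont cont').
by exists t => //; move: tin; rewrite in_itv.
Qed.
End RealIneq2.
Section Key.
Context {R : realType}.

Lemma inv_facts (t : R) : 0 < t -> t * t^-1 = 1 /\ 0 < t^-1.
Proof. move=> t0; split; [by rewrite mulfV // gt_eqF | by rewrite invr_gt0]. Qed.

Lemma c_pos (M : R) : 1 < M -> 0 < M - 1 - ln M.
Proof.
move=> M1.
have [t /andP[t1 tM] e] := @Ff_mvt R 1 0 1 M ltr01 M1.
move: e; rewrite !FfE ln1 /Dd.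
have [h1 h2] := @inv_facts t (lt_trans ltr01 t1).
move: h1 h2; set w := t^-1 => h1 h2 e.
nra.
Qed.

Lemma a_ge_2c (M : R) : 1 < M -> 2 * (M - 1 - ln M) <= (M - 1) * (M - 1).
Proof.
move=> M1.
have [t /andP[t1 tM] e] := @Ff_mvt R 2 1 1 M ltr01 M1.
move: e; rewrite !FfE ln1 /Dd.
have [h1 h2] := @inv_facts t (lt_trans ltr01 t1).
move: h1 h2; set w := t^-1 => h1 h2 e.
have w1 : w < 1 by nra.
have hh : 2 * (1 - w) - 1 * (2 * (t - 1)) <= 0 by nra.
have : (2 * (1 - w) - 1 * (2 * (t - 1))) * (M - 1) <= 0.
  by rewrite mulr_le0_ge0 // subr_ge0 ltW.
nra.
Qed.

Lemma key_ineq (M x : R) : 1 < M -> 0 < x -> x <= M ->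
  (x - 1) * (x - 1) * (M - 1 - ln M) <= (M - 1) * (M - 1) * (x - 1 - ln x).
Proof.
move=> M1 x0 xM.
have cp := @c_pos M M1.
have ac := @a_ge_2c M M1.
set c := M - 1 - ln M in cp ac *.
set a := (M - 1) * (M - 1) in ac *.
suff : a <= Ff a c x.
  rewrite FfE; nra.
have FM : Ff a c M = a by rewrite FfE /c /a; ring.
have F1 : Ff a c 1 = a by rewrite FfE ln1; ring.
have Dfac : forall t, 0 < t -> Dd a c t = (t - 1) * (a * t^-1 - 2 * c).
  move=> t t0; have [h1 h2] := @inv_facts t t0.
  rewrite /Dd; move: h1 h2; set w := t^-1 => h1 h2.
  have e1 : 1 - w = w * (t - 1) by rewrite mulrBr mulrC h1 mulr1.
  rewrite e1; ring.
case: (ltrgtP x 1) => [x1|x1|->]; last by rewrite F1.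
- have [t /andP[t1 tM] e] := @Ff_mvt R a c x 1 x0 x1.
  have t0 := lt_trans x0 t1.
  have [h1 h2] := @inv_facts t t0.
  move: e; rewrite Dfac // F1 => e.
  have w1 : 1 <= t^-1 by nra.
  have : a * t^-1 >= 2 * c by nra.
  move=> h.
  have : (t - 1) * (a * t^-1 - 2 * c) <= 0.
    by rewrite mulr_le0_ge0 // ?subr_le0 ?subr_ge0 // ltW.
  nra.
- case: (lerP a (2 * c * x)) => hx.
  + case: (ltrgtP x M) => [xM'|xM'|->]; last by rewrite FM.
    * have [t /andP[t1 tM] e] := @Ff_mvt R a c x M x0 xM'.
      have t0 := lt_trans x0 t1.
      have [h1 h2] := @inv_facts t t0.
      move: e; rewrite Dfac // FM => e.
      have h3 : a < 2 * c * t by nra.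
      have h : a * t^-1 <= 2 * c by nra.
      have : (t - 1) * (a * t^-1 - 2 * c) <= 0.
        by rewrite mulr_ge0_le0 // ?subr_le0 ?subr_ge0 // ltW // (lt_trans x1).
      nra.
    * by move: xM; rewrite leNgt xM'.
  + have [t /andP[t1 tM] e] := @Ff_mvt R a c 1 x ltr01 x1.
    have t0 := lt_trans ltr01 t1.
    have [h1 h2] := @inv_facts t t0.
    move: e; rewrite Dfac // F1 => e.
    have h3 : 2 * c * t < a by nra.
    have h : 2 * c <= a * t^-1 by nra.
    have : 0 <= (t - 1) * (a * t^-1 - 2 * c).
      by apply: mulr_ge0; rewrite subr_ge0 // ltW.
    nra.
Qed.
End Key.

End M_scratch.
Import M_scratch.

Module M_s3.
Local Open Scope classical_set_scope.
Local Open Scope ring_scope.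

Section Point.
Context {R : realType}.

Lemma point_ineq (p q x r lp L lZ b k C : R) : 0 < b -> 0 < q -> p = q * x ->
  lp = r / b - lZ -> ln x = lp - L -> (x - 1) ^+ 2 <= k * (x - 1 - ln x) ->
  C = 2 + k - k * lZ ->
  p * (p / q) <= q + k * (((p * r - b * (p * lp)) - (q * r - b * (q * L))) * b^-1)
                 + (p - q) * C.
Proof.
move=> b0 q0 -> -> -> hk ->.
rewrite -subr_ge0.
have -> : q + k * ((q * x * r - b * (q * x * (r / b - lZ)) - (q * r - b * (q * L))) * b^-1) +
  (q * x - q) * (2 + k - k * lZ) - q * x * (q * x / q) =
  q * (k * (x - 1 - (r / b - lZ - L)) - (x - 1) ^+ 2).
  field; by rewrite ?gt_eqF.

by apply: mulr_ge0; [exact: ltW | rewrite subr_ge0].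
Qed.

Lemma kappa_bound (M x : R) : 1 < M -> 0 < x -> x <= M ->
  (x - 1) ^+ 2 <= kappa M * (x - 1 - ln x).
Proof.
move=> M1 x0 xM.
have cp := @c_pos _ M M1.
have := @key_ineq _ M x M1 x0 xM.
move=> h; rewrite /kappa mulrAC ler_pdivlMr // !expr2.
Qed.

End Point.

End M_s3.
Import M_s3.

Module M_s4.
Local Open Scope classical_set_scope.
Local Open Scope ring_scope.

Section State.
Context {R : realType} {A : finType}.

Lemma state_bound (ref q r p : A -> R) (Z b Rb : R) :
  (forall a, 0 < ref a) -> \sum_a ref a = 1 -> (forall a, 0 < q a) -> \sum_a q a = 1 ->
  (forall a, 0 <= r a <= Rb) -> (forall a, `|ln (q a / ref a)| <= Rb / b) -> 0 < b -> 0 < Rb ->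
  Z = \sum_a ref a * expR (r a / b) ->
  (forall a, p a = ref a * expR (r a / b) / Z) ->
  \sum_a p a * (p a / q a) <= 1 + kappa (expR (2 * Rb / b)) *
     (((\sum_a p a * r a - b * KL p ref) - (\sum_a q a * r a - b * KL q ref)) * b^-1).
Proof.
move=> ref0 sref q0 sq rb Lb b0 Rb0 hZ hp.
set M := expR (2 * Rb / b).
set k := kappa M.
have Z1 : 1 <= Z.
  rewrite -sref hZ; apply: ler_sum => a _.
  rewrite -[X in X <= _]mulr1; apply: ler_wpM2l; first exact: ltW.
  have := expR_ge1Dx (r a / b).
  have : 0 <= r a / b.
    by case/andP: (rb a) => ra _; apply: divr_ge0 => //; exact: ltW.
  move=> h1 h2; lra.
have Z0 : 0 < Z by exact: lt_le_trans ltr01 Z1.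
have p0 a : 0 < p a by rewrite hp !mulr_gt0 ?invr_gt0 ?expR_gt0.
have lp a : ln (p a / ref a) = r a / b - ln Z.
  have -> : p a / ref a = expR (r a / b) * Z^-1.
    by rewrite hp; field; rewrite ?gt_eqF.
  by rewrite lnM ?posrE ?expR_gt0 ?invr_gt0 // expRK lnV ?posrE.
have sp : \sum_a p a = 1.
  under eq_bigr do rewrite hp.
  by rewrite -mulr_suml -hZ divff // gt_eqF.
have lnx a : ln (p a / q a) = ln (p a / ref a) - ln (q a / ref a).
  have e : p a / ref a = (p a / q a) * (q a / ref a).
    by field; rewrite ?gt_eqF.
  rewrite e [ln (_ * (q a / ref a))]lnM ?posrE ?divr_gt0 //; ring.
have M1 : 1 < M by rewrite /M expR_gt1 divr_gt0 ?mulr_gt0.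
have xM a : p a / q a <= M.
  have <- : expR (ln (p a / q a)) = p a / q a by apply: lnK; rewrite posrE divr_gt0.
  rewrite /M ler_expR lnx lp.
  have h1 : r a / b <= Rb / b.
    by case/andP: (rb a) => _ ra; rewrite ler_pM2r ?invr_gt0.
  have h2 : 0 <= ln Z by rewrite ln_ge0.
  have h3 := Lb a.
  have h4 : - ln (q a / ref a) <= `|ln (q a / ref a)| by rewrite -normrN ler_norm.
  have -> : 2 * Rb / b = Rb / b + Rb / b by field; rewrite gt_eqF.
  lra.
set C := 2 + k - k * ln Z.
have E : 1 + k * (((\sum_a p a * r a - b * KL p ref) - (\sum_a q a * r a - b * KL q ref)) * b^-1)
  = \sum_a (q a + k * (((p a * r a - b * (p a * ln (p a / ref a))) - (q a * r a - b * (q a * ln (q a / ref a)))) * b^-1) + (p a - q a) * C).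
  rewrite big_split big_split /= -mulr_suml sumrB sp sq subrr mul0r addr0.
  by rewrite -mulr_sumr -mulr_suml !sumrB -!mulr_sumr /KL.
rewrite E; apply: ler_sum => a _.
apply: (@point_ineq _ (p a) (q a) (p a / q a) (r a) (ln (p a / ref a)) (ln (q a / ref a)) (ln Z)) => //.
all: try (by rewrite mulrC divfK // gt_eqF).
all: try (by apply: kappa_bound => //; rewrite divr_gt0).
Qed.
End State.

End M_s4.
Import M_s4.

Module M_s5.
Local Open Scope classical_set_scope.
Local Open Scope ring_scope.

Section State2.
Context {R : realType} {A : finType}.

Lemma Z_ge1 (ref r : A -> R) (b : R) : (forall a, 0 < ref a) -> \sum_a ref a = 1 ->
  (forall a, 0 <= r a) -> 0 < b -> 1 <= \sum_a ref a * expR (r a / b).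
Proof.
move=> ref0 sref r0 b0.
rewrite -sref; apply: ler_sum => a _.
rewrite -[X in X <= _]mulr1; apply: ler_wpM2l; first exact: ltW.
have := expR_ge1Dx (r a / b).
have : 0 <= r a / b by apply: divr_ge0 => //; exact: ltW.
move=> h1 h2; lra.
Qed.

Lemma lnZ_le (ref r : A -> R) (b Rb : R) : (forall a, 0 < ref a) -> \sum_a ref a = 1 ->
  (forall a, 0 <= r a <= Rb) -> 0 < b -> ln (\sum_a ref a * expR (r a / b)) <= Rb / b.
Proof.
move=> ref0 sref rb b0.
have Z1 := @Z_ge1 ref r b ref0 sref (fun a => proj1 (andP (rb a))) b0.
rewrite -[X in _ <= X]expRK ler_ln ?posrE ?expR_gt0 ?(lt_le_trans ltr01 Z1) //.
have -> : expR (Rb / b) = \sum_a ref a * expR (Rb / b) by rewrite -mulr_suml sref mul1r.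
apply: ler_sum => a _; apply: ler_wpM2l; first exact: ltW.
rewrite ler_expR ler_pM2r ?invr_gt0 //; by case/andP: (rb a).
Qed.

Lemma state_g (ref r p : A -> R) (Z b : R) :
  (forall a, 0 < ref a) -> 0 < Z -> 0 < b ->
  Z = \sum_a ref a * expR (r a / b) ->
  (forall a, p a = ref a * expR (r a / b) / Z) ->
  \sum_a p a * r a - b * KL p ref = b * ln Z.
Proof.
move=> ref0 Z0 b0 hZ hp.
have lp a : ln (p a / ref a) = r a / b - ln Z.
  have -> : p a / ref a = expR (r a / b) * Z^-1.
    by rewrite hp; field; rewrite ?gt_eqF.
  by rewrite lnM ?posrE ?expR_gt0 ?invr_gt0 // expRK lnV ?posrE.
have sp : \sum_a p a = 1.
  under eq_bigr do rewrite hp.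
  by rewrite -mulr_suml -hZ divff // gt_eqF.
have -> : KL p ref = \sum_a p a * (r a / b - ln Z) by apply: eq_bigr => a _; rewrite lp.
have -> : \sum_a p a * (r a / b - ln Z) = (\sum_a p a * r a) / b - ln Z * \sum_a p a.
  rewrite mulr_suml mulr_sumr -sumrB; apply: eq_bigr => a _; ring.
rewrite sp; field; by rewrite gt_eqF.
Qed.

Lemma g_bound (ref r p : A -> R) (Z b Rb : R) :
  (forall a, 0 < ref a) -> \sum_a ref a = 1 -> (forall a, 0 <= r a <= Rb) -> 0 < b ->
  Z = \sum_a ref a * expR (r a / b) ->
  (forall a, p a = ref a * expR (r a / b) / Z) ->
  `| \sum_a p a * r a - b * KL p ref | <= Rb.
Proof.
move=> ref0 sref rb b0 hZ hp.
have Z1 := @Z_ge1 ref r b ref0 sref (fun a => proj1 (andP (rb a))) b0.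
rewrite -hZ in Z1.
rewrite (@state_g ref r p Z b ref0 (lt_le_trans ltr01 Z1) b0 hZ hp).
have h1 := @lnZ_le ref r b Rb ref0 sref rb b0; rewrite -hZ in h1.
have h2 : 0 <= ln Z by rewrite ln_ge0.
rewrite ger0_norm; last by apply: mulr_ge0 => //; exact: ltW.
rewrite -(ler_pM2l b0) in h1.
by move: h1; rewrite mulrCA divff ?gt_eqF // mulr1.
Qed.

Lemma h_bound (ref r q : A -> R) (b Rb : R) :
  (forall a, 0 <= q a) -> \sum_a q a = 1 -> (forall a, 0 <= r a <= Rb) -> 0 < b ->
  (forall a, `|ln (q a / ref a)| <= Rb / b) ->
  `| \sum_a q a * r a - b * KL q ref | <= Rb + Rb.
Proof.
move=> q0 sq rb b0 Lb.
apply: le_trans (ler_normB _ _) _.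
apply: lerD.
- apply: le_trans (ler_norm_sum _ _ _) _.
  have -> : Rb = \sum_a q a * Rb by rewrite -mulr_suml sq mul1r.
  apply: ler_sum => a _; rewrite normrM ger0_norm // ler_wpM2l //.
  by case/andP: (rb a) => r0 r1; rewrite ger0_norm.
- rewrite normrM gtr0_norm //.
  have : `|KL q ref| <= Rb / b.
    apply: le_trans (ler_norm_sum _ _ _) _.
    have -> : Rb / b = \sum_a q a * (Rb / b) by rewrite -mulr_suml sq mul1r.
    apply: ler_sum => a _; rewrite normrM ger0_norm // ler_wpM2l //.
  move=> h; have := ler_wpM2l (ltW b0) h; by rewrite mulrCA divff ?gt_eqF // mulr1.
Qed.
End State2.

End M_s5.
Import M_s5.


Lemma minv (R : realType) (d : measure_display) (S : measurableType d) (f : S -> R) :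
  measurable_fun setT f -> (forall s, (0 < f s)%R) ->
  measurable_fun setT (fun s => (f s)^-1)%R.
Proof.
move=> mf f0.
have -> : (fun s => (f s)^-1)%R = (fun s => expR ((-1) * ln (f s)))%R.
  apply/funext => s; rewrite mulN1r expRN lnK // posrE; exact: f0.
apply: measurableT_comp; first exact: measurable_expR.
apply: measurable_funM; first exact: measurable_cst.
apply: measurableT_comp => //; exact: measurable_ln.
Qed.

Lemma bounded_of (R : realType) (T : Type) (f : T -> R) (B : R) :
  (forall x, (`|f x| <= B)%R) -> [bounded f x | x in setT].
Proof.
move=> hB; rewrite /bounded_near; near=> M => x _ /=.
apply: (le_trans (hB x)); near: M; apply: nbhs_pinfty_ge; exact: num_real.
Unshelve. all: end_near. Qed.

Theorem lemmaE4 (R : realType) (d : measure_display) (S : measurableType d)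
  (A : finType) (rho : probability S R) (piref : S -> A -> R)
  (beta Rb : R) (rstar : S -> A -> R) (pi : S -> A -> R) :
  is_policy piref ->
  (forall s a, (0 < piref s a)%R) ->
  (0 < beta)%R -> (0 < Rb)%R ->
  (forall s a, (0 <= rstar s a <= Rb)%R) ->
  (forall a, measurable_fun setT (fun s => piref s a)) ->
  (forall a, measurable_fun setT (fun s => rstar s a)) ->
  (forall a, measurable_fun setT (fun s => pi s a)) ->
  Pi_le piref Rb beta pi ->
  (Cov rho (pistar piref rstar beta) pi <=
     1 + (kappa (expR (2 * Rb / beta)))%:E *
         ((Jbeta rho piref rstar beta (pistar piref rstar beta)
           - Jbeta rho piref rstar beta pi) * (beta^-1)%:E))%E.
Proof.
move=> Hpref Href0 b0 Rb0 rb mref mr mpi [Hpi Hpib].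
set p := pistar piref rstar beta.
set Zf := fun s => (\sum_b piref s b * expR (rstar s b / beta))%R.
have Z1 s : (1 <= Zf s)%R.
  exact: (@Z_ge1 R A (piref s) (rstar s) beta (Href0 s) (proj2 (Hpref s))
    (fun a => proj1 (andP (rb s a))) b0).
have Z0 s : (0 < Zf s)%R by exact: lt_le_trans ltr01 (Z1 s).
have mZ : measurable_fun setT Zf.
  apply: measurable_sum => a; apply: measurable_funM => //.
  apply: measurableT_comp; first exact: measurable_expR.
  apply: measurable_funM => //; exact: measurable_cst.
have mp a : measurable_fun setT (fun s => p s a).
  rewrite /p /pistar; apply: measurable_funM; last exact: minv.
  apply: measurable_funM => //.
  apply: measurableT_comp; first exact: measurable_expR.
  apply: measurable_funM => //; exact: measurable_cst.
have pi0 s a : (0 < pi s a)%R := proj1 (Hpib s a).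
set f := fun s => (\sum_a p s a * (p s a / pi s a))%R.
set g := fun s => (\sum_a p s a * rstar s a - beta * KL (p s) (piref s))%R.
set h := fun s => (\sum_a pi s a * rstar s a - beta * KL (pi s) (piref s))%R.
have mf : measurable_fun setT f.
  apply: measurable_sum => a; apply: measurable_funM => //.
  apply: measurable_funM => //; exact: minv.
have mlnp a : measurable_fun setT (fun s => ln (p s a / piref s a)).
  apply: measurableT_comp; first exact: measurable_ln.
  apply: measurable_funM => //; exact: minv.
have mlnpi a : measurable_fun setT (fun s => ln (pi s a / piref s a)).
  apply: measurableT_comp; first exact: measurable_ln.
  apply: measurable_funM => //; exact: minv.
have mg : measurable_fun setT g.
  apply: measurable_funB.
    by apply: measurable_sum => a; apply: measurable_funM.
  apply: measurable_funM; first exact: measurable_cst.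
  by apply: measurable_sum => a; apply: measurable_funM.
have mh : measurable_fun setT h.
  apply: measurable_funB.
    by apply: measurable_sum => a; apply: measurable_funM.
  apply: measurable_funM; first exact: measurable_cst.
  by apply: measurable_sum => a; apply: measurable_funM.
have pt s : (f s <= 1 + kappa (expR (2 * Rb / beta)) * ((g s - h s) * beta^-1))%R.
  apply: (@state_bound R A (piref s) (pi s) (rstar s) (p s) (Zf s) beta Rb) => //.
  - by case: (Hpref s).
  - by case: (Hpi s).
  - by move=> a; case: (Hpib s a).
set k := kappa (expR (2 * Rb / beta)).
set c := (k * beta^-1)%R.
have gb s : (`|g s| <= Rb)%R.
  apply: (@g_bound R A (piref s) (rstar s) (p s) (Zf s) beta Rb) => //.
  by case: (Hpref s).
have hb s : (`|h s| <= Rb + Rb)%R.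
  apply: (@h_bound R A (piref s) (rstar s) (pi s) beta Rb) => //.
  - by move=> a; apply: ltW.
  - by case: (Hpi s).
  - by move=> a; case: (Hpib s a).
have fin : (rho setT < +oo)%E by rewrite probability_setT ltry.
have ig : rho.-integrable setT (fun s => (g s)%:E).
  exact: (@measurable_bounded_integrable _ _ _ rho g setT measurableT fin mg (@bounded_of R S g Rb gb)).
have ih : rho.-integrable setT (fun s => (h s)%:E).
  exact: (@measurable_bounded_integrable _ _ _ rho h setT measurableT fin mh (@bounded_of R S h _ hb)).
have i1 : rho.-integrable setT (fun s => 1%:E).
  exact: (@finite_measure_integrable_cst _ _ _ rho setT 1%R measurableT).
have -> : Cov rho p pi = (\int[rho]_s (f s)%:E)%E by [].
have -> : Jbeta rho piref rstar beta p = (\int[rho]_s (g s)%:E)%E by [].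
have -> : Jbeta rho piref rstar beta pi = (\int[rho]_s (h s)%:E)%E by [].
have [G eG] : exists G : R, (\int[rho]_s (g s)%:E)%E = G%:E.
  exists (fine (\int[rho]_s (g s)%:E)%E); rewrite fineK //; exact: integrable_fin_num.
have [H eH] : exists H : R, (\int[rho]_s (h s)%:E)%E = H%:E.
  exists (fine (\int[rho]_s (h s)%:E)%E); rewrite fineK //; exact: integrable_fin_num.
have icg : rho.-integrable setT (fun s => (c%:E * (g s)%:E)%E) by exact: integrableZl.
have ich : rho.-integrable setT (fun s => (c%:E * (h s)%:E)%E) by exact: integrableZl.
have step : (\int[rho]_s (1 + k * ((g s - h s) * beta^-1))%:E = (1 + c * G - c * H)%:E)%E.
  transitivity (\int[rho]_s (1%:E + ((c%:E * (g s)%:E) - (c%:E * (h s)%:E))))%E.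
    apply: eq_integral => s _; rewrite -!EFinM -EFinB -EFinD /c; congr EFin; ring.
  rewrite integralD //; last exact: integrableB.
  have e1 : (\int[rho]_s (1 : \bar R))%E = 1%E.
    have := @integral_cst d S R rho setT measurableT 1%E; move=> ->.
    have ps : rho setT = 1%E by exact: probability_setT.
    by rewrite mul1e.
  have e2 := @integralB d S R rho setT measurableT _ _ icg ich.
  rewrite /= in e2.
  rewrite e1 e2.
  rewrite (@integralZl d S R rho setT measurableT (fun s => (g s)%:E) ig c).
  rewrite (@integralZl d S R rho setT measurableT (fun s => (h s)%:E) ih c).
  by rewrite eG eH -!EFinM -EFinB -EFinD addrA.
have p0 s a : (0 < p s a)%R.
  by rewrite /p /pistar !mulr_gt0 ?invr_gt0 ?expR_gt0 // -/(Zf s).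
apply: (le_trans (y := (\int[rho]_s (1 + k * ((g s - h s) * beta^-1))%:E)%E)).
  apply: ge0_le_integral => //.
  - move=> s _; rewrite lee_fin; apply: sumr_ge0 => a _.
    by apply: mulr_ge0; [exact: ltW | apply: divr_ge0; exact: ltW].
  - exact/measurable_EFinP.
  - apply/measurable_EFinP; apply: measurable_funD; first exact: measurable_cst.
    apply: measurable_funM; first exact: measurable_cst.
    apply: measurable_funM; last exact: measurable_cst.
    exact: measurable_funB.
  - by move=> s _; rewrite lee_fin; exact: pt.
rewrite step eG eH -EFinB -!EFinM -EFinD lee_fin.
suff -> : (1 + c * G - c * H = 1 + k * ((G - H) * beta^-1))%R by [].
rewrite /c; ring.
Qed.
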